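(* Let $G$ be a finite group acting linearly and isometrically on $\mathbb{R}^n$. Let $X=t_0+\epsilon$ where $\mathbb{E}(\epsilon)=0$ and $\epsilon$ is sub-Gaussian in the sense that there exist $c>0$, $s>0$ with $$\mathbb{E}\big(\exp\langle\epsilon,m\rangle\big)\le c\exp\Big(\frac{s^2\|m\|^2}{2}\Big)\quad\text{for all } m\in\mathbb{R}^n.$$ If $m\in\mathbb{R}^n$ satisfies $\tilde\rho:=d_Q([m],[t_0])\ge s\sqrt{2\log(c|G|)}$, then $$\tilde\rho^2-\tilde\rho\, s\sqrt{8\log(c|G|)}\le F(m)-\mathbb{E}(\|\epsilon\|^2).$$
   Context: The action is linear and isometric: each $x\mapsto g\cdot x$ is linear with $\|g\cdot x\|=\|x\|$ (Euclidean norm, inner product $\langle\cdot,\cdot\rangle$). $|G|$ is the cardinality of $G$, $d_Q([a],[b])=\min_{g\in G}\|g\cdot a-b\|$ and $F(m)=\mathbb{E}\big(\min_{g\in G}\|g\cdot X-m\|^2\big)$. *)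

(* Defs.v *)
From HB Require Import structures.
From mathcomp Require Import all_boot all_order all_algebra all_fingroup.
From mathcomp Require Import all_classical all_reals all_analysis.
From mathcomp Require Import probability.
Set Implicit Arguments. Unset Strict Implicit. Unset Printing Implicit Defensive.
Import Order.TTheory GRing.Theory Num.Theory.
Local Open Scope ring_scope.

Definition dotv {R : realType} {n : nat} (x y : 'rV[R]_n) : R :=
  \sum_(i < n) x ord0 i * y ord0 i.
Definition normv {R : realType} {n : nat} (x : 'rV[R]_n) : R :=
  Num.sqrt (dotv x x).

Definition lin_isom_action {R : realType} {n : nat} {gT : finGroupType}
  (act : gT -> 'rV[R]_n -> 'rV[R]_n) : Prop :=
  [/\ forall x, act 1%g x = x,
      forall g h x, act (g * h)%g x = act g (act h x),
      forall g (a : R) x y, act g (a *: x + y) = a *: act g x + act g y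
    & forall g x, normv (act g x) = normv x].

(* min over g in G of f g; the fold starts at f 1, which is one of the values,
   so this is exactly min_{g in G} f g. *)
Definition gmin {R : realType} {gT : finGroupType} (f : gT -> R) : R :=
  \big[Num.min/f 1%g]_(g : gT) f g.

Definition dQ {R : realType} {n : nat} {gT : finGroupType}
  (act : gT -> 'rV[R]_n -> 'rV[R]_n) (a b : 'rV[R]_n) : R :=
  gmin (fun g => normv (act g a - b)).

(* Main.v *)
Require Import Defs.
From HB Require Import structures.
From mathcomp Require Import all_boot all_order all_algebra all_fingroup.
From mathcomp Require Import all_classical all_reals all_analysis.
From mathcomp Require Import probability measurable_realfun.
From mathcomp Require Import ring lra.
Import Order.TTheory GRing.Theory Num.Theory.
Local Open Scope ring_scope.

Section Alg.
Variables (R : realType) (n : nat).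
Implicit Types x y z : 'rV[R]_n.

Lemma dotvC x y : dotv x y = dotv y x.
Proof. by apply: eq_bigr => i _; rewrite mulrC. Qed.

Lemma dotvDl x y z : dotv (x + y) z = dotv x z + dotv y z.
Proof. by rewrite /dotv -big_split; apply: eq_bigr => i _; rewrite !mxE mulrDl. Qed.

Lemma dotvZl (a : R) x y : dotv (a *: x) y = a * dotv x y.
Proof. by rewrite /dotv mulr_sumr; apply: eq_bigr => i _; rewrite !mxE mulrA. Qed.

Lemma dotvDr x y z : dotv z (x + y) = dotv z x + dotv z y.
Proof. by rewrite dotvC dotvDl !(dotvC z). Qed.

Lemma dotvZr (a : R) x y : dotv y (a *: x) = a * dotv y x.
Proof. by rewrite dotvC dotvZl dotvC. Qed.

Lemma dotv_ge0 x : 0 <= dotv x x.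
Proof. by apply: sumr_ge0 => i _; rewrite -expr2 sqr_ge0. Qed.

Lemma normv_sq x : normv x ^+ 2 = dotv x x.
Proof. by rewrite /normv sqr_sqrtr // dotv_ge0. Qed.

Lemma normv_ge0 x : 0 <= normv x.
Proof. exact: sqrtr_ge0. Qed.

Lemma normvD2 x y : normv (x + y) ^+ 2 = normv x ^+ 2 + 2 * dotv x y + normv y ^+ 2.
Proof. rewrite !normv_sq dotvDl !dotvDr (dotvC y x); lra. Qed.

Lemma normvZ2 (a : R) x : normv (a *: x) ^+ 2 = a ^+ 2 * normv x ^+ 2.
Proof. by rewrite !normv_sq dotvZl dotvZr mulrA expr2. Qed.

Lemma dotv0r x : dotv x 0 = 0.
Proof. by rewrite /dotv big1 // => i _; rewrite mxE mulr0. Qed.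

Lemma normv0 : normv (0 : 'rV[R]_n) = 0.
Proof. by rewrite /normv dotv0r sqrtr0. Qed.

Lemma dotv_row (e : 'I_n -> R) (v : 'rV[R]_n) :
  dotv (\row_i e i) v = \sum_(i < n) e i * v ord0 i.
Proof. by apply: eq_bigr => i _; rewrite mxE. Qed.

Variable gT : finGroupType.
Variable act : gT -> 'rV[R]_n -> 'rV[R]_n.
Hypothesis H : lin_isom_action act.

Lemma actD g x y : act g (x + y) = act g x + act g y.
Proof. by case: H => _ _ L _; have := L g 1 x y; rewrite !scale1r. Qed.

Lemma actB g x y : act g (x - y) = act g x - act g y.
Proof.
case: H => _ _ L _.
by have := L g (-1) y x; rewrite !scaleN1r addrC => ->; rewrite addrC.
Qed.

Lemma actV g x : act g (act g^-1 x) = x.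
Proof. by case: H => h1 hM _ _; rewrite -hM mulgV h1. Qed.

Lemma actVn g x : normv (act g^-1 x) = normv x.
Proof. by case: H. Qed.

Lemma act_sq g e t0 m :
  normv (act g (t0 + e) - m) ^+ 2 = normv ((t0 - act g^-1 m) + e) ^+ 2.
Proof.
case: H => _ _ _ hn.
by rewrite -{1}(actV g m) -actB hn; congr (normv _ ^+ 2); rewrite addrAC.
Qed.

End Alg.

Lemma gmin_le (R : realType) (gT : finGroupType) (f : gT -> R) g :
  gmin f <= f g.
Proof.
rewrite /gmin (bigD1 g) //=.
by rewrite ge_min lexx.
Qed.

Lemma gmin_attained (R : realType) (gT : finGroupType) (f : gT -> R) :
  exists g, gmin f = f g.
Proof.
rewrite /gmin; apply: (big_ind (fun x => exists g, x = f g)).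
- by exists 1%g.
- move=> x y [g1 ->] [g2 ->]; case: (leP (f g1) (f g2)).
  + by move=> h; exists g1.
  + by move=> h; exists g2.
- by move=> g _; exists g.
Qed.

Lemma measurable_bigmin (R : realType) d (T : measurableType d) (I : Type)
  (s : seq I) (h0 : T -> R) (h : I -> T -> R) :
  measurable_fun setT h0 -> (forall i, measurable_fun setT (h i)) ->
  measurable_fun setT (fun w => \big[Num.min/h0 w]_(i <- s) h i w).
Proof.
move=> m0 mh; elim: s => [|i s IH].
  by under eq_fun do rewrite big_nil.
under eq_fun do rewrite big_cons.
exact: measurable_realfun.measurable_minr.
Qed.

Lemma sq_le_exp (R : realType) (x : R) : x ^+ 2 <= 4 * (expR x + expR (- x)).
Proof.
have key (y : R) : 0 <= y -> y ^+ 2 <= 4 * expR y.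
  move=> y0.
  have e2 : expR y = expR (y / 2) ^+ 2 by rewrite expr2 -expRD; congr expR; lra.
  have h1 := expR_ge1Dx (y / 2).
  have h2 : 0 <= y / 2 by lra.
  rewrite e2; nra.
have ep := expR_ge0 x; have en := expR_ge0 (- x).
case: (lerP 0 x) => hx.
  have := key x hx; lra.
have := key (- x); rewrite sqrrN; move=> /(_ ltac:(lra)); lra.
Qed.

Section Main.
Variables (R : realType) (n : nat) (gT : finGroupType)
  (act : gT -> 'rV[R]_n -> 'rV[R]_n)
  (d : measure_display) (T : measurableType d) (P : probability T R)
  (eps : 'I_n -> T -> R) (t0 m : 'rV[R]_n) (c s : R).
Hypothesis HA : lin_isom_action act.
Hypothesis me : forall i, measurable_fun setT (eps i).
Hypothesis c0 : 0 < c.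
Hypothesis s0 : 0 < s.
Hypothesis Hsg : forall v : 'rV[R]_n,
     ('E_P[fun w => expR (dotv (\row_i eps i w) v)]
      <= (c * expR (s ^+ 2 * normv v ^+ 2 / 2))%:E)%E.

Lemma Eint (X : T -> R) : ('E_P[X] = \int[P]_w (X w)%:E)%E.
Proof. by rewrite unlock. Qed.

Lemma mdot v : measurable_fun setT (fun w => dotv (\row_i eps i w) v).
Proof.
under eq_fun do rewrite dotv_row.
apply: measurable_sum => i.
exact: (measurable_realfun.measurable_funM (me i) (measurable_cst _)).
Qed.

Lemma mexp v : measurable_fun setT (fun w => expR (dotv (\row_i eps i w) v)).
Proof. exact: (measurableT_comp (@measurable_realfun.measurable_expR R) (mdot v)). Qed.

Lemma mnorm v : measurable_fun setT (fun w => normv (v + \row_i eps i w) ^+ 2).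
Proof.
under eq_fun do rewrite normv_sq.
apply: measurable_sum => i.
have h : measurable_fun setT (fun w => (v + \row_i eps i w) ord0 i).
  under eq_fun do rewrite !mxE.
  exact: (measurable_realfun.measurable_funD (measurable_cst _) (me i)).
exact: (measurable_realfun.measurable_funM h h).
Qed.

Lemma mN : measurable_fun setT (fun w => normv (\row_i eps i w) ^+ 2).
Proof. by have := mnorm 0; under eq_fun do rewrite add0r. Qed.

Lemma mf : measurable_fun setT
  (fun w => gmin (fun g => normv (act g (t0 + \row_i eps i w) - m) ^+ 2)).
Proof.
have mh g : measurable_fun setT (fun w => normv (act g (t0 + \row_i eps i w) - m) ^+ 2).
  under eq_fun do rewrite (@act_sq _ _ _ _ HA).
  exact: mnorm.
exact: (@measurable_bigmin _ _ _ _ (index_enum gT) _ _ (mh 1%g) mh).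
Qed.

Lemma c1 : 1 <= c.
Proof.
have := Hsg 0.
have -> : (fun w => expR (dotv (\row_i eps i w) 0)) = cst 1.
  by apply/funext => w; rewrite dotv0r expR0.
rewrite expectation_cst normv0 expr0n /= mulr0 mul0r expR0 mulr1 lee_fin.
done.
Qed.


Definition delta (i : 'I_n) : 'rV[R]_n := \row_j ((j == i)%:R : R).

Lemma dot_delta i w : dotv (\row_i eps i w) (delta i) = eps i w.
Proof.
rewrite dotv_row (bigD1 i) //= big1 ?addr0.
  by rewrite !mxE eqxx mulr1.
by move=> j /negbTE hj; rewrite !mxE hj mulr0.
Qed.

Lemma dot_ndelta i w : dotv (\row_i eps i w) (- delta i) = - eps i w.
Proof. by rewrite -scaleN1r dotvZr dot_delta mulN1r. Qed.

Lemma EN_fin : exists n0, 0 <= n0 /\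
  (\int[P]_w (normv (\row_i eps i w) ^+ 2)%:E = n0%:E)%E.
Proof.
set N := (\int[P]_w _)%E.
have N0 : (0 <= N)%E by apply: integral_ge0 => w _; rewrite lee_fin sqr_ge0.
have G0 i w : (0 <= 4%:E * (expR (dotv (\row_i eps i w) (delta i)))%:E
          + 4%:E * (expR (dotv (\row_i eps i w) (- delta i)))%:E)%E.
  by rewrite -!EFinM -EFinD lee_fin addr_ge0 // mulr_ge0 // expR_ge0.
have mG i : measurable_fun setT (fun w => (4%:E * (expR (dotv (\row_i eps i w) (delta i)))%:E
          + 4%:E * (expR (dotv (\row_i eps i w) (- delta i)))%:E)%E : \bar R).
  apply: emeasurable_funD; apply: measurable_funeM; apply/measurable_EFinP; exact: mexp.
have le1 : (N <= \int[P]_w (\sum_(i < n) (4%:E * (expR (dotv (\row_i eps i w) (delta i)))%:E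
          + 4%:E * (expR (dotv (\row_i eps i w) (- delta i)))%:E)))%E.
  apply: ge0_le_integral => //.
  - by move=> w _; rewrite lee_fin sqr_ge0.
  - by apply/measurable_EFinP; exact: mN.
  - exact: emeasurable_sum.
  - move=> w _; under eq_bigr do rewrite -!EFinM -EFinD.
    rewrite sumEFin lee_fin normv_sq dotv_row; apply: ler_sum => i _.
    rewrite mxE dot_delta dot_ndelta -expr2 -mulrDr; exact: sq_le_exp.
rewrite (ge0_integral_sum _ measurableT mG (fun i w _ => G0 i w)) in le1.
have le2 : (\sum_(i < n) \int[P]_w (4%:E * (expR (dotv (\row_i eps i w) (delta i)))%:E
          + 4%:E * (expR (dotv (\row_i eps i w) (- delta i)))%:E)
   <= \sum_(i < n) (4 * (c * expR (s ^+ 2 * normv (delta i) ^+ 2 / 2))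
         + 4 * (c * expR (s ^+ 2 * normv (- delta i) ^+ 2 / 2)))%:E)%E.
  apply: lee_sum => i _.
  have mE (v : 'rV[R]_n) : measurable_fun setT (fun w => (expR (dotv (\row_i eps i w) v))%:E : \bar R).
    by apply/measurable_EFinP; exact: mexp.
  have mE4 (v : 'rV[R]_n) : measurable_fun setT (fun w => (4%:E * (expR (dotv (\row_i eps i w) v))%:E)%E : \bar R).
    exact: measurable_funeM.
  have E0 (v : 'rV[R]_n) (w : T) : (0 <= (expR (dotv (\row_i eps i w) v))%:E :> \bar R)%E.
    by rewrite lee_fin expR_ge0.
  have E40 (v : 'rV[R]_n) (w : T) : (0 <= 4%:E * (expR (dotv (\row_i eps i w) v))%:E :> \bar R)%E.
    by rewrite -EFinM lee_fin mulr_ge0 // expR_ge0.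
  rewrite (ge0_integralD _ measurableT (fun w _ => E40 _ w) (mE4 _) (fun w _ => E40 _ w) (mE4 _)).
  rewrite !(ge0_integralZl_EFin _ measurableT (fun w _ => E0 _ w) (mE _) (ler0n _ 4)).
  rewrite (EFinD (4 * _)); apply: leeD; rewrite (EFinM 4); apply: lee_wpmul2l => //;
    by rewrite -Eint; apply: Hsg.
rewrite sumEFin in le2.
have : (N < +oo)%E by apply: (le_lt_trans le1); apply: (le_lt_trans le2); exact: ltry.
rewrite -ge0_fin_numE // => /fineK <-.
by exists (fine N); split => //; rewrite fine_ge0.
Qed.


Lemma normvN (x : 'rV[R]_n) : normv (- x) = normv x.
Proof. by rewrite /normv -scaleN1r dotvZl dotvZr mulrA mulrNN mulr1 mul1r. Qed.

Lemma intDc (h : T -> R) (r : R) : (forall w, 0 <= h w) -> 0 <= r ->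
  measurable_fun setT h ->
  (\int[P]_w ((h w)%:E + r%:E) = \int[P]_w (h w)%:E + r%:E)%E.
Proof.
move=> h0 r0 mh.
rewrite (ge0_integralD _ measurableT (f2 := cst r%:E)) //.
- rewrite integral_cst //; congr (_ + _)%E; rewrite -[RHS]mule1; congr (_ * _)%E; exact: probability_setT.
- by move=> w _; rewrite lee_fin.
- exact/measurable_EFinP.
Qed.

Lemma core (lam : R) : 0 < lam -> 2 * s ^+ 2 * lam <= 1 ->
  ((dQ act m t0 ^+ 2 * (1 - 2 * s ^+ 2 * lam) - ln (c * #|gT|%:R) / lam)%:E
   <= 'E_P[fun w => gmin (fun g => (normv (act g (t0 + \row_i eps i w) - m) ^+ 2)%R)]
      - 'E_P[fun w => (normv (\row_i eps i w) ^+ 2)%R])%E.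
Proof.
move=> l0 hl.
set rho := dQ act m t0.
set L := ln _.
set q := 1 - 2 * s ^+ 2 * lam.
have q0 : 0 <= q by rewrite /q; lra.
have rho0 : 0 <= rho.
  by rewrite /rho /dQ; have [g ->] := @gmin_attained _ _ (fun g => normv (act g m - t0)); exact: (@normv_ge0 R n).
set v := fun g : gT => t0 - act g^-1%g m.
set a := fun g => normv (v g) ^+ 2.
have arho g : rho ^+ 2 <= a g.
  have h : rho <= normv (v g).
    apply: (le_trans (@gmin_le _ _ _ (g^-1)%g)).
    by rewrite -normvN opprB.
  rewrite /a; have := @normv_ge0 R n (v g); nra.
set t := L - lam * rho ^+ 2 * q.
set k := fun g => expR (- t) * expR (- lam * a g) / lam.
set wv := fun g => (- 2 * lam) *: v g.
set K := fun w => \sum_(g : gT) k g * expR (dotv (\row_i eps i w) (wv g)).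
set B := (1 - t) / lam.
set f := fun w => gmin (fun g => normv (act g (t0 + \row_i eps i w) - m) ^+ 2).
set N := fun w => normv (\row_i eps i w) ^+ 2.
have k0 g : 0 <= k g by rewrite /k divr_ge0 ?mulr_ge0 ?expR_ge0 // ltW.
have K0 w : 0 <= K w by apply: sumr_ge0 => g _; rewrite mulr_ge0 ?expR_ge0.
have pw w : N w + B <= f w + K w.
  have [g fg] := @gmin_attained _ _ (fun g => normv (act g (t0 + \row_i eps i w) - m) ^+ 2).
  rewrite /f fg (@act_sq _ _ _ _ HA) normvD2 -/(v g) -/(a g) -/(N w).
  set D := dotv (v g) (\row_i eps i w).
  have Kg : k g * expR (dotv (\row_i eps i w) (wv g)) <= K w.
    rewrite /K (bigD1 g) //= lerDl; apply: sumr_ge0 => h _.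
    by rewrite mulr_ge0 ?expR_ge0.
  have ee : k g * expR (dotv (\row_i eps i w) (wv g)) =
      expR (- lam * (a g + 2 * D) - t) / lam.
    rewrite /k /wv dotvZr dotvC -/D mulrAC -!expRD.
    congr (expR _ / _); ring.
  have hexp := expR_ge1Dx (- lam * (a g + 2 * D) - t).
  have e1 : (1 + (- lam * (a g + 2 * D) - t)) / lam = (1 - t) / lam - (a g + 2 * D).
    by field; rewrite gt_eqF.
  have h2 : (1 + (- lam * (a g + 2 * D) - t)) / lam <= expR (- lam * (a g + 2 * D) - t) / lam.
    by rewrite ler_pM2r ?invr_gt0.
  rewrite /B; lra.
have mK : measurable_fun setT K.
  apply: measurable_sum => g.
  exact: (measurable_realfun.measurable_funM (measurable_cst _) (mexp _)).
have mf' : measurable_fun setT f by exact: mf.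
have mN' : measurable_fun setT N by exact: mN.
have absB : 0 <= B + `|B| by case: (lerP 0 B) => hB; [rewrite ger0_norm|rewrite ltr0_norm]; lra.
have I1 : (\int[P]_w ((N w)%:E + (B + `|B|)%:E) <= \int[P]_w ((f w + K w)%:E + `|B|%:E))%E.
  apply: ge0_le_integral => //.
  - by move=> w _; rewrite -EFinD lee_fin addr_ge0 // sqr_ge0.
  - by apply: emeasurable_funD => //; exact/measurable_EFinP.
  - apply: emeasurable_funD => //; apply/measurable_EFinP.
    exact: measurable_realfun.measurable_funD.
  - by move=> w _; rewrite -!EFinD lee_fin; have := pw w; lra.
have f0 w : 0 <= f w.
  by rewrite /f; have [g ->] := @gmin_attained _ _ (fun g => normv (act g (t0 + \row_i eps i w) - m) ^+ 2); rewrite sqr_ge0.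
rewrite (@intDc N) // in I1; last by move=> w; rewrite sqr_ge0.
rewrite (@intDc (fun w => f w + K w)) // in I1; last first.
  - exact: measurable_realfun.measurable_funD.
  - by move=> w; rewrite addr_ge0.
rewrite (ge0_integralD _ measurableT (f1 := fun w => (f w)%:E) (f2 := fun w => (K w)%:E)) in I1; first last.
  - exact/measurable_EFinP.
  - by move=> w _; rewrite lee_fin.
  - exact/measurable_EFinP.
  - by move=> w _; rewrite lee_fin.
have cg : (0 < #|gT|)%N by apply/card_gt0P; exists 1%g.
have mE (u : 'rV[R]_n) : measurable_fun setT (fun w => (expR (dotv (\row_i eps i w) u))%:E : \bar R).
  by apply/measurable_EFinP; exact: mexp.
have E0 (u : 'rV[R]_n) (w : T) : (0 <= (expR (dotv (\row_i eps i w) u))%:E :> \bar R)%E.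
  by rewrite lee_fin expR_ge0.
have IK : (\int[P]_w (K w)%:E <= (lam^-1)%:E)%E.
  rewrite (eq_integral (fun w => \sum_(g : gT) ((k g)%:E * (expR (dotv (\row_i eps i w) (wv g)))%:E)%E)); last first.
    by move=> w _; rewrite /K -sumEFin; apply: eq_bigr => g _; rewrite EFinM.
  rewrite (ge0_integral_sum _ measurableT (fun g => measurable_funeM _ (mE (wv g)))); last first.
    by move=> g w _; rewrite -EFinM lee_fin mulr_ge0 // expR_ge0.
  apply: (@le_trans _ _ (\sum_(g : gT) (k g * (c * expR (s ^+ 2 * normv (wv g) ^+ 2 / 2)))%:E)%E).
    apply: lee_sum => g _.
    rewrite (ge0_integralZl_EFin _ measurableT (fun w _ => E0 _ w) (mE _) (k0 g)).
    rewrite (EFinM (k g)); apply: lee_wpmul2l; first by rewrite lee_fin.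
    by rewrite -Eint; exact: Hsg.
  rewrite sumEFin lee_fin.
  have lq : 0 <= lam * q by rewrite mulr_ge0 // ltW.
  have tb g : k g * (c * expR (s ^+ 2 * normv (wv g) ^+ 2 / 2))
      <= c * expR (- t) * expR (- lam * rho ^+ 2 * q) / lam.
    rewrite /k /wv normvZ2 -/(a g).
    have ex : expR (- lam * a g) * expR (s ^+ 2 * ((-2 * lam) ^+ 2 * a g) / 2)
        = expR (- lam * a g * q) by rewrite -expRD /q; congr expR; field.
    have mono : expR (- lam * a g * q) <= expR (- lam * rho ^+ 2 * q).
      by rewrite ler_expR; have := arho g; nra.
    have -> : expR (- t) * expR (- lam * a g) / lam * (c * expR (s ^+ 2 * ((-2 * lam) ^+ 2 * a g) / 2))
      = c * expR (- t) * (expR (- lam * a g) * expR (s ^+ 2 * ((-2 * lam) ^+ 2 * a g) / 2)) / lam by ring.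
    by rewrite ex ler_pM2r ?invr_gt0 // ler_pM2l // mulr_gt0 // expR_gt0.
  apply: (le_trans (ler_sum _ (fun g _ => tb g))).
  rewrite sumr_const -mulr_natr.
  have eL : expR (- t) * expR (- lam * rho ^+ 2 * q) = (c * #|gT|%:R)^-1.
    rewrite -expRD (_ : - t + _ = - L); last by rewrite /t; ring.
    by rewrite expRN lnK // posrE mulr_gt0 // ltr0n.
  have -> : c * expR (- t) * expR (- lam * rho ^+ 2 * q) / lam * #|gT|%:R
    = c * #|gT|%:R * (expR (- t) * expR (- lam * rho ^+ 2 * q)) / lam by ring.
  by rewrite eL mulfV ?mul1r // mulf_neq0 ?gt_eqF // ltr0n.
have [n0 [n00 En]] := EN_fin.
rewrite !Eint.
rewrite En in I1 *.
have Ik0 : (0 <= \int[P]_w (K w)%:E)%E by apply: integral_ge0 => w _; rewrite lee_fin.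
have : (\int[P]_w (K w)%:E)%E \is a fin_num.
  by rewrite ge0_fin_numE // (le_lt_trans IK) // ltry.
move=> /fineK Ke; move: IK I1 Ik0; rewrite -Ke; set k1 := fine _ => IK I1 Ik0.
rewrite !lee_fin in IK Ik0.
have Ef0 : (0 <= \int[P]_w (f w)%:E)%E by apply: integral_ge0 => w _; rewrite lee_fin.
move: I1 Ef0; case: (\int[P]_w (f w)%:E)%E => [x | | ] I1 Ef0.
- rewrite -!EFinD lee_fin in I1; rewrite -EFinB lee_fin.
  have eB : rho ^+ 2 * q - L / lam = B - lam^-1.
    by rewrite /B /t; field; rewrite gt_eqF.
  rewrite eB; lra.
- by rewrite addye // leey.
- by [].
Qed.

End Main.
Theorem mainTheorem7 (R : realType) (n : nat) (gT : finGroupType)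
  (act : gT -> 'rV[R]_n -> 'rV[R]_n)
  (d : measure_display) (T : measurableType d) (P : probability T R)
  (eps : 'I_n -> T -> R) (t0 m : 'rV[R]_n) (c s : R) :
  lin_isom_action act ->
  (forall i, measurable_fun setT (eps i)) ->
  (forall i, P.-integrable setT (EFin \o eps i)) ->
  (forall i, ('E_P[eps i] = 0)%E) ->
  0 < c -> 0 < s ->
  (forall v : 'rV[R]_n,
     ('E_P[fun w => expR (dotv (\row_i eps i w) v)]
      <= (c * expR (s ^+ 2 * normv v ^+ 2 / 2))%:E)%E) ->
  let X := fun w => t0 + \row_i eps i w in
  let F := fun m' : 'rV[R]_n =>
             ('E_P[fun w => gmin (fun g => (normv (act g (X w) - m') ^+ 2)%R)])%E in
  let rho := dQ act m t0 in
  s * Num.sqrt (2 * ln (c * #|gT|%:R)) <= rho ->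
  ((rho ^+ 2 - rho * s * Num.sqrt (8 * ln (c * #|gT|%:R)))%:E
   <= F m - 'E_P[fun w => (normv (\row_i eps i w) ^+ 2)%R])%E.
Proof.
move=> HA me _ _ c0 s0 Hsg X F rho hrho.
have core' := @core _ _ _ _ _ _ _ _ t0 m _ _ HA me c0 Hsg.
rewrite /F /X /=.
move: core' hrho; rewrite -/rho.
set L := ln (c * #|gT|%:R).
set Y := (X in ((_ <= X)%E)).
move=> core' hrho.
have cc1 : 1 <= c := @c1 _ _ _ _ _ _ c s Hsg.
have cg : 1 <= #|gT|%:R :> R.
  by rewrite ler1n; apply/card_gt0P; exists 1%g.
have L0 : 0 <= L by rewrite /L ln_ge0 //; nra.
have s20 : 0 < s ^+ 2 by rewrite exprn_gt0.
have rho0 : 0 <= rho.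
  by rewrite /rho /dQ; have [g ->] := @gmin_attained _ _ (fun g => normv (act g m - t0)); exact: (@normv_ge0 R n).
case: (ltrP 0 L) => hL.
- set qq := Num.sqrt L; set r2 := Num.sqrt (2 : R).
  have qq0 : 0 < qq by rewrite sqrtr_gt0.
  have r20 : 0 < r2 by rewrite sqrtr_gt0.
  have r2sq : r2 ^+ 2 = 2 by rewrite sqr_sqrtr.
  have qsq : qq ^+ 2 = L by rewrite sqr_sqrtr // ltW.
  have s2L : Num.sqrt (2 * L) = r2 * qq by rewrite sqrtrM.
  have s8L : Num.sqrt (8 * L) = 2 * r2 * qq.
    rewrite sqrtrM // (_ : (8 : R) = 2 ^+ 2 * 2); last by rewrite expr2; lra.
    by rewrite sqrtrM ?sqr_ge0 // sqrtr_sqr ger0_norm.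
  rewrite s2L in hrho; rewrite s8L.
  have rhop : 0 < rho.
    by apply: (lt_le_trans _ hrho); rewrite !mulr_gt0.
  pose lam := qq / (r2 * s * rho).
  have l0 : 0 < lam by rewrite /lam divr_gt0 // !mulr_gt0.
  have h2r : 2 / r2 = r2 by rewrite -{1}r2sq expr2 mulfK // gt_eqF.
  have e1 : 2 * s ^+ 2 * lam = (2 / r2) * (s * qq / rho).
    by rewrite /lam; field; rewrite !gt_eqF.
  rewrite h2r in e1.
  have e2 : L / lam = qq * r2 * s * rho.
    by rewrite /lam -qsq; field; rewrite !gt_eqF.
  have e3 : r2 * (s * qq / rho) = (s * (r2 * qq)) / rho.
    by field; rewrite gt_eqF.
  have hl : 2 * s ^+ 2 * lam <= 1.
    by rewrite e1 e3 ler_pdivrMr // mul1r.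
  have := core' lam l0 hl; rewrite e1 e2.
  have -> : rho ^+ 2 * (1 - r2 * (s * qq / rho)) - qq * r2 * s * rho
     = rho ^+ 2 - rho * s * (2 * r2 * qq) by field; rewrite gt_eqF.
  done.
- have L00 : L = 0 by apply/eqP; rewrite eq_le hL L0.
  rewrite L00 mulr0 sqrtr0 mulr0 subr0.
  have HY lam : 0 < lam -> 2 * s ^+ 2 * lam <= 1 ->
      ((rho ^+ 2 * (1 - 2 * s ^+ 2 * lam))%:E <= Y)%E.
    by move=> l0 hl; have := core' lam l0 hl; rewrite L00 mul0r subr0.
  have l00 : 0 < (2 * s ^+ 2)^-1 by rewrite invr_gt0 mulr_gt0.
  have hl0 : 2 * s ^+ 2 * (2 * s ^+ 2)^-1 <= 1 by rewrite mulfV // gt_eqF // mulr_gt0.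
  have := HY _ l00 hl0; rewrite mulfV ?gt_eqF ?mulr_gt0 // subrr mulr0.
  case: Y HY => [y | | ] HY Y0.
  + rewrite lee_fin in Y0 *.
    case: (lerP (rho ^+ 2) y) => // hy.
    have r2p : 0 < rho ^+ 2 by lra.
    have rp : 0 < rho by nra.
    pose l1 := (rho ^+ 2 - y) / (4 * s ^+ 2 * rho ^+ 2).
    have p4 : 0 < 4 * s ^+ 2 * rho ^+ 2 by apply: mulr_gt0 => //; apply: mulr_gt0.
    have l10 : 0 < l1 by rewrite /l1 divr_gt0 // subr_gt0.
    have e : 2 * s ^+ 2 * l1 = (rho ^+ 2 - y) / (2 * rho ^+ 2).
      by rewrite /l1; field; rewrite !gt_eqF.
    have hl1 : 2 * s ^+ 2 * l1 <= 1.
      by rewrite e ler_pdivrMr ?mulr_gt0 // mul1r; lra.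
    have := HY _ l10 hl1; rewrite lee_fin e.
    have -> : rho ^+ 2 * (1 - (rho ^+ 2 - y) / (2 * rho ^+ 2)) = (rho ^+ 2 + y) / 2.
      by field; rewrite gt_eqF.
    rewrite lee_fin; lra.
  + by rewrite leey.
  + by [].
Qed.
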